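(* Let $j\geq 2$ be an integer and let $T$ be a tree of order $n>10j$. If $\mu\neq 1$ is a Laplacian eigenvalue of $T$ with $m_T(\mu)=\lfloor \frac{n}{2}\rfloor - j$, then $\mu=\frac{3\pm\sqrt{5}}{2}$.
   Context: For a graph $G$, the Laplacian matrix is $L(G)=D(G)-A(G)$, with $D(G)$ the diagonal degree matrix and $A(G)$ the adjacency matrix; its eigenvalues are the Laplacian eigenvalues, and $m_G(\mu)$ denotes the multiplicity of $\mu$ as an eigenvalue of $L(G)$. *)

(* Defs.v *)
From mathcomp Require Import all_boot all_order all_algebra.
Set Implicit Arguments. Unset Strict Implicit. Unset Printing Implicit Defensive.
Import Order.TTheory GRing.Theory Num.Theory.
Local Open Scope ring_scope.

Definition simple_graph (n : nat) (e : rel 'I_n) : Prop :=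
  symmetric e /\ irreflexive e.

Definition connected_graph (n : nat) (e : rel 'I_n) : Prop :=
  forall x y : 'I_n, connect e x y.

Definition acyclic_graph (n : nat) (e : rel 'I_n) : Prop :=
  forall p : seq 'I_n, uniq p -> (3 <= size p)%N -> ~~ cycle e p.

Definition is_tree (n : nat) (e : rel 'I_n) : Prop :=
  [/\ simple_graph e, connected_graph e & acyclic_graph e].

Definition degree (n : nat) (e : rel 'I_n) (i : 'I_n) : nat :=
  #|[set j | e i j]|.

Definition laplacian (R : nzRingType) (n : nat) (e : rel 'I_n) : 'M[R]_n :=
  \matrix_(i, j) ((if i == j then (degree e i)%:R else 0)
                  - (if e i j then 1 else 0)).

Definition lap_mult (R : fieldType) (n : nat) (e : rel 'I_n) (mu : R) : nat :=
  mup mu (char_poly (laplacian R e)).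

(* Main.v *)
Require Import Defs.
From mathcomp Require Import all_boot all_order all_algebra.
From mathcomp Require Import zify ring.
Set Implicit Arguments. Unset Strict Implicit. Unset Printing Implicit Defensive.
Import Order.TTheory GRing.Theory Num.Theory.

Local Open Scope ring_scope.

Lemma char_poly_similar (F : fieldType) n (P A B : 'M[F]_n) :
  P \in unitmx -> P *m A = B *m P -> char_poly A = char_poly B.
Proof.
move=> Pu PA.
pose Q := map_mx (@polyC F) P.
have QA : Q *m char_poly_mx A = char_poly_mx B *m Q.
  rewrite /char_poly_mx mulmxBr mulmxBl -!map_mxM PA.
  by rewrite -scalar_mxC.
have := congr1 determinant QA; rewrite !det_mulmx [X in _ = X]mulrC.
have dQ : \det Q != 0 by rewrite det_map_mx polyC_eq0 -unitfE -unitmxE.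
by move/(mulfI dQ).
Qed.

Lemma self_orth0 (R : realFieldType) g k (E : 'M[R]_(g, k)) (u : 'rV[R]_k) :
  (u <= E)%MS -> u *m E^T = 0 -> u = 0.
Proof.
move=> /submxP [c ->] h.
have h2 : (c *m E) *m (c *m E)^T = 0.
  by rewrite trmx_mul mulmxA h mul0mx.
apply/rowP => j.
have := congr1 (fun M : 'M_1 => M 0 0) h2; rewrite /= !mxE => hs.
have hj := @psumr_eq0P _ _ predT (fun i => (c *m E) 0 i * (c *m E)^T i 0).
have nn : forall i : 'I_k, true -> 0 <= (c *m E) 0 i * (c *m E)^T i 0.
  by move=> i _; rewrite [X in _ * X]mxE -expr2 sqr_ge0.
have {hj} hj := hj nn hs j isT.
move: hj; rewrite /= [X in _ * X]mxE => /eqP; rewrite mulf_eq0 orbb => /eqP.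
by rewrite mxE.
Qed.

Lemma mup_sym_gk (R : realFieldType) g k (A : 'M[R]_(g + k)) (mu : R) :
  A^T = A -> \rank (eigenspace A mu) = g -> mup mu (char_poly A) = g.
Proof.
move=> As Hg.
set V := eigenspace A mu.
pose E : 'M[R]_(g, g + k) := castmx (Hg, erefl) (row_base V).
have EV : (E :=: V)%MS by apply: eqmx_trans (eqmx_cast _ _) (eq_row_base _).
have rE : \rank E = g by rewrite EV.
have EA : E *m A = mu *: E by apply/eigenspaceP; rewrite EV.
have Wk : \rank (kermx E^T) = k by rewrite mxrank_ker mxrank_tr rE addKn.
pose W : 'M[R]_(k, g + k) := castmx (Wk, erefl) (row_base (kermx E^T)).
have WK : (W :=: kermx E^T)%MS by apply: eqmx_trans (eqmx_cast _ _) (eq_row_base _).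
have rW : \rank W = k by rewrite WK.
have cap0 : forall u : 'rV[R]_(g + k), (u <= E)%MS -> (u <= W)%MS -> u = 0.
  move=> u uE uW; apply: (self_orth0 uE); apply/sub_kermxP; by rewrite -WK.
have capEW : (E :&: W)%MS = 0.
  apply/eqP; rewrite -submx0; apply/row_subP => i.
  rewrite (cap0 (row i (E :&: W)%MS)) ?sub0mx //.
    exact: submx_trans (row_sub _ _) (capmxSl _ _).
  exact: submx_trans (row_sub _ _) (capmxSr _ _).
have WA : (W *m A <= W)%MS.
  rewrite WK; apply/sub_kermxP.
  have : W *m E^T = 0 by apply/sub_kermxP; rewrite -WK.
  rewrite -mulmxA -{1}As -trmx_mul EA => h.
  by rewrite linearZ /= -scalemxAr h scaler0.
pose B := W *m A *m pinvmx W.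
have WAB : W *m A = B *m W by rewrite /B mulmxKpV.
pose P := col_mx E W.
have Pu : P \in unitmx.
  rewrite -row_free_unit /row_free /P -addsmxE.
  by rewrite mxrank_disjoint_sum // rE rW.
have PA : P *m A = block_mx (mu%:M) 0 0 B *m P.
  by rewrite mul_block_col mul_col_mx EA WAB !mul0mx addr0 add0r mul_scalar_mx.
rewrite (char_poly_similar Pu PA).
rewrite /char_poly char_block_diag_mx det_ublock.
have -> : char_poly_mx (mu%:M : 'M[R]_g) = ('X - mu%:P)%:M.
  by rewrite /char_poly_mx map_scalar_mx /= raddfB.
rewrite det_scalar mupMl ?mup_XsubCX ?eqxx //.
rewrite -/(char_poly B) -eigenvalue_root_char.
apply/negP => /eigenvalueP [v vB vn0].
have uW : (v *m W <= W)%MS by apply: submxMl.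
have uE : (v *m W <= E)%MS.
  rewrite EV; apply/eigenspaceP.
  by rewrite -mulmxA WAB mulmxA vB scalemxAl.
move: vn0; rewrite -(mulmx_free_eq0 _ (_ : row_free W)); last by rewrite /row_free rW.
by rewrite (cap0 _ uE uW) eqxx.
Qed.

Lemma mup_sym (R : realFieldType) n (A : 'M[R]_n) (mu : R) :
  A^T = A -> mup mu (char_poly A) = \rank (eigenspace A mu).
Proof.
move=> As.
suff gen : forall g k, n = (g + k)%N -> \rank (eigenspace A mu) = g ->
    mup mu (char_poly A) = g.
  by apply: (gen _ (n - \rank (eigenspace A mu))%N) => //; rewrite subnKC // rank_leq_col.
move=> g k h; move: A As; rewrite h => A As; exact: mup_sym_gk.
Qed.

Lemma lap_eq (R : realFieldType) n (e : rel 'I_n) (sym_e : symmetric e)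
  (irr_e : irreflexive e) (mu : R)
  (x : 'rV[R]_n) : x *m (laplacian R e - mu%:M) = 0 ->
  forall j, ((degree e j)%:R - mu) * x 0 j = \sum_(i | e j i) x 0 i.
Proof.
move=> /rowP h j; have := h j; rewrite !mxE.
under eq_bigr do rewrite !mxE.
rewrite (bigD1 j) //= eqxx mulr1n irr_e subr0.
have -> : \sum_(i < n | i != j)
     x 0 i *
     ((if i == j then (degree e i)%:R else 0) - (if e i j then 1 else 0) -
      mu *+ (i == j)) = - \sum_(i | e j i) x 0 i.
  rewrite -sumrN big_mkcond [RHS]big_mkcond /=; apply: eq_bigr => i _.
  case: (eqVneq i j) => [->|ij]; first by rewrite irr_e.
  by rewrite sym_e /=; case: (e j i); rewrite ?mulr0n !subr0 ?sub0r ?mulrN1 ?mulr0.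
by move/eqP; rewrite subr_eq0 mulrC => /eqP.
Qed.

Local Close Scope ring_scope.

Section Tree.
Variables (n : nat) (e : rel 'I_n) (r : 'I_n).
Hypotheses (sym_e : symmetric e) (eirr : irreflexive e)
  (econn : connected_graph e) (eacyc : acyclic_graph e).

Fixpoint ball k : {set 'I_n} :=
  if k is k'.+1 then ball k' :|: [set v | [exists u in ball k', e u v]]
  else [set r].

Lemma ball_path p : path e r p -> last r p \in ball (size p).
Proof.
elim/last_ind: p => [|q v IH]; first by rewrite /= inE.
rewrite rcons_path last_rcons size_rcons => /andP [pq ev] /=.
rewrite in_setU; apply/orP; right; rewrite inE; apply/existsP.
by exists (last r q); rewrite IH.
Qed.

Lemma ball_ex v : exists k, v \in ball k.
Proof.
have := econn r v => /connectP [p pth ->]; exists (size p); exact: ball_path.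
Qed.

Definition depth v := ex_minn (ball_ex v).

Lemma ball_mono k m : k <= m -> ball k \subset ball m.
Proof.
move=> /subnKC <-; elim: (m - k) => [|i IH]; first by rewrite addn0.
rewrite addnS; apply: subset_trans IH _; exact: subsetUl.
Qed.

Lemma depthP v : v \in ball (depth v).
Proof. by rewrite /depth; case: ex_minnP. Qed.

Lemma depth_min v k : v \in ball k -> depth v <= k.
Proof. by rewrite /depth; case: ex_minnP => m _ H /H. Qed.

Lemma in_ball v k : (v \in ball k) = (depth v <= k).
Proof.
apply/idP/idP; first exact: depth_min.
by move=> h; apply: (subsetP (ball_mono h)); apply: depthP.
Qed.

Lemma depth_r : depth r = 0.
Proof. by apply/eqP; rewrite -leqn0 -in_ball /= inE. Qed.

Lemma depth0 v : depth v = 0 -> v = r.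
Proof. by move=> h; have := depthP v; rewrite h /= inE => /eqP. Qed.

Lemma depth_edge u v : e u v -> depth v <= (depth u).+1.
Proof.
move=> euv; rewrite -in_ball /= in_setU; apply/orP; right.
by rewrite inE; apply/existsP; exists u; rewrite depthP.
Qed.

Lemma depth_parent v : v != r -> exists u, e u v && ((depth u).+1 == depth v).
Proof.
move=> vr; case Hd: (depth v) => [|k]; first by move: vr; rewrite (depth0 Hd) eqxx.
have := depthP v; rewrite Hd /= in_setU => /orP [].
  by rewrite in_ball Hd ltnn.
rewrite inE => /existsP [u /andP [uk euv]]; exists u; rewrite euv /=.
have := depth_edge euv; rewrite in_ball in uk; rewrite Hd; lia.
Qed.

Definition par v := odflt v [pick u | e u v && ((depth u).+1 == depth v)].

Lemma parP v : v != r -> e (par v) v /\ (depth (par v)).+1 = depth v.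
Proof.
move=> vr; rewrite /par; case: pickP => [u /andP [-> /eqP ->] //|H].
by have [u] := depth_parent vr; rewrite H.
Qed.

Lemma par_r : par r = r.
Proof. by rewrite /par; case: pickP => // u; rewrite depth_r andbF. Qed.

Lemma depth_par v : v != r -> depth v = (depth (par v)).+1.
Proof. by move=> /parP []. Qed.

Lemma neq_r_depth v : (v != r) = (0 < depth v).
Proof.
apply/idP/idP => [/depth_par -> //|]; apply: contraL => /eqP ->.
by rewrite depth_r.
Qed.

Lemma Lpath h : forall a b, a != b -> depth a = h -> depth b = h ->
  exists p, [/\ p != [::], path e a (rcons p b), uniq (a :: rcons p b)
            & all (fun x => depth x < h) p].
Proof.
elim: h => [|h IH] a b ab da db.
  by move: ab; rewrite (depth0 da) (depth0 db) eqxx.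
have ar : a != r by rewrite neq_r_depth da.
have br : b != r by rewrite neq_r_depth db.
have [ea pa] := parP ar; have [eb pb] := parP br.
have dpa : depth (par a) = h by move: pa; rewrite da => -[].
have dpb : depth (par b) = h by move: pb; rewrite db => -[].
case: (eqVneq (par a) (par b)) => [E|ne].
  exists [:: par a]; split => //=.
    by rewrite sym_e ea /= E eb.
  rewrite !inE negb_or ab /= andbT.
  apply/and3P; split => //; apply/eqP => h1;
    [move: dpa; rewrite -h1 da | move: dpa; rewrite h1 db]; lia.
  by rewrite dpa ltnSn.
have [q [qn qp qu qd]] := IH _ _ ne dpa dpb.
have hq : all (fun x => depth x <= h) (par a :: rcons q (par b)).
  rewrite /= dpa leqnn /= all_rcons dpb leqnn /=.
  by apply: sub_all qd => x /= /ltnW.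
exists (par a :: rcons q (par b)); split => //.
  by rewrite /= sym_e ea /= rcons_path qp /= last_rcons eb.
have nin : forall y, depth y = h.+1 -> y \notin (par a :: rcons q (par b)).
  move=> y dy; apply/negP => yin; move/allP: hq => /(_ y yin); lia.
rewrite cons_uniq rcons_uniq qu mem_rcons inE negb_or ab nin // nin //.
Qed.

Lemma par_uniq u v : e u v -> (depth u).+1 = depth v -> u = par v.
Proof.
move=> euv du.
have vr : v != r by rewrite neq_r_depth -du.
have [ep dp] := parP vr.
case: (eqVneq u (par v)) => // ne; exfalso.
have dd : depth (par v) = depth u by apply: succn_inj; rewrite dp du.
have [q [qn qp qu qd]] := Lpath ne erefl dd.
have := eacyc (p := v :: u :: rcons q (par v)).
rewrite /= rcons_path qp last_rcons ep sym_e euv /= size_rcons.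
have vnin : v \notin u :: rcons q (par v).
  apply/negP; rewrite inE mem_rcons inE => /or3P [/eqP h|/eqP h|vq].
  - by move: du; rewrite h; lia.
  - by move: dp; rewrite -h; lia.
  - move/allP: qd => /(_ v vq); rewrite -du; lia.
move: qu; rewrite cons_uniq => qu.
by rewrite vnin qu => /(_ isT isT).
Qed.

Lemma no_same_depth a b : e a b -> depth a != depth b.
Proof.
move=> eab; apply/eqP => dab.
have ab : a != b by apply: contraTneq eab => ->; rewrite eirr.
have [q [qn qp qu qd]] := @Lpath (depth a) a b ab erefl (esym dab).
have := eacyc (p := a :: rcons q b).
rewrite /= rcons_path qp last_rcons sym_e eab /= size_rcons.
move: qu; rewrite cons_uniq => /andP [q1 q2]; rewrite q1 q2 /=.
by case: q qn {qp q1 q2 qd} => // ? ? _ /(_ isT isT).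
Qed.

Definition deg v := degree e v.
Definition ch v u := e v u && (depth u == (depth v).+1)%N.
Definition small u := (deg u == 1)%N ||
  ((deg u == 2)%N && [exists l, ch u l && (deg l == 1)%N]).
Definition big u := (u != r) && ~~ small u.
Definition Bi := [set v | [exists u, ch v u && big u]].
Definition desig v := odflt v [pick u | ch v u && big u].
Definition Bs := [set u | big u].
Definition Ds := desig @: Bi.
Definition Ss := r |: (Bs :\: Ds).
Definition Bl := Bs :\: Bi.

Lemma ch_par v u : ch v u -> par u = v /\ u != r.
Proof.
move=> /andP [evu /eqP du]; have ur : u != r by rewrite neq_r_depth du.
by split => //; apply/esym/par_uniq.
Qed.

Lemma ch_par' v : v != r -> ch (par v) v.
Proof. by move=> /parP [ep dp]; rewrite /ch ep dp eqxx. Qed.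

Lemma nbr v u : e v u -> (depth u <= depth v)%N || ch v u.
Proof.
move=> evu; rewrite /ch evu /=; have := depth_edge evu.
by rewrite leq_eqVlt ltnS orbC.
Qed.

Lemma desigP v : v \in Bi -> ch v (desig v) && big (desig v).
Proof.
rewrite inE /desig => /existsP [u hu]; case: pickP => [w //|H].
by rewrite H in hu.
Qed.

Local Open Scope ring_scope.
Lemma sum_deg1 (R : nzRingType) (x : 'I_n -> R) v p :
  deg v = 1%N -> e v p -> \sum_(i | e v i) x i = x p.
Proof.
move=> /eqP /cards1P [q hq] evp.
have : p \in [set i | e v i] by rewrite inE.
rewrite hq inE => /eqP ->.
rewrite (eq_bigl (fun i => i \in [set q])); last by move=> i; rewrite -hq inE.
by rewrite big_set1.
Qed.

Lemma sum_deg2 (R : nzRingType) (x : 'I_n -> R) v p l :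
  deg v = 2%N -> p != l -> e v p -> e v l -> \sum_(i | e v i) x i = x p + x l.
Proof.
move=> dv pl evp evl.
have E : [set i | e v i] = [set p; l].
  apply/eqP; rewrite eq_sym eqEcard; apply/andP; split.
    by apply/subsetP => i; rewrite !inE => /orP [] /eqP ->.
  by rewrite cards2 pl; move: dv; rewrite /deg /degree => ->.
rewrite (eq_bigl (fun i => i \in [set p; l])); last by move=> i; rewrite -E inE.
by rewrite big_setU1 ?inE // big_set1.
Qed.

Section Forcing.
Variables (R : realFieldType) (mu : R) (x : 'rV[R]_n).
Hypotheses (mu1 : mu != 1) (mu2 : mu ^+ 2 - 3%:R * mu + 1 != 0)
  (Hx : forall j, ((deg j)%:R - mu) * x 0 j = \sum_(i | e j i) x 0 i)
  (HS : forall s, s \in Ss -> x 0 s = 0).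

Lemma small_zero p v : ch p v -> small v -> x 0 p = 0 -> x 0 v = 0.
Proof.
move=> cpv sv xp; have [pv vr] := ch_par cpv.
have evp : e v p by move: cpv => /andP []; rewrite sym_e.
case/orP: sv => [/eqP d1 | /andP [/eqP d2 /existsP [l /andP [cvl /eqP dl]]]].
  have := Hx v; rewrite (sum_deg1 _ d1 evp) d1 xp => /eqP.
  by rewrite mulf_eq0 subr_eq0 eq_sym (negPf mu1) => /eqP.
have elv : e l v by move: cvl => /andP []; rewrite sym_e.
have pl : p != l.
  apply/eqP => h; move: cvl cpv => /andP [_ /eqP] + /andP [_ /eqP]; rewrite h; lia.
have evl : e v l by rewrite sym_e.
have hl := Hx l; rewrite (sum_deg1 _ dl elv) dl in hl.
have := Hx v; rewrite (sum_deg2 _ d2 pl evp evl) d2 xp add0r -hl => h.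
have : (mu ^+ 2 - 3%:R * mu + 1) * x 0 l = 0.
  rewrite -[RHS](subrr (x 0 l)) -[X in _ = X - _]h; ring.
move/eqP; rewrite mulf_eq0 (negPf mu2) /= => /eqP xl.
by rewrite xl mulr0.
Qed.

Lemma forcing_depth k : forall v, (depth v <= k)%N -> x 0 v = 0.
Proof.
elim: k => [|k IH] v.
  by rewrite leqn0 => /eqP /depth0 ->; apply: HS; rewrite /Ss setU11.
rewrite leq_eqVlt ltnS => /orP [/eqP dv|]; last exact: IH.
have vr : v != r by rewrite neq_r_depth dv.
set p := par v.
have cpv : ch p v := ch_par' vr.
have dp : depth p = k by move: dv; rewrite depth_par // => -[].
have xp : x 0 p = 0 by apply: IH; rewrite dp.
case sv: (small v); first exact: small_zero cpv sv xp.
have bv : big v by rewrite /big vr sv.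
case vS: (v \in Ss); first exact: HS.
have vD : v \in Ds.
  by move: vS; rewrite /Ss !inE bv (negPf vr) /= andbT => /negbFE.
case/imsetP: vD => w wBi vw.
have := desigP wBi; rewrite -vw => /andP [cwv _].
have wp : w = p by have [<-] := ch_par cwv.
have Hsum : \sum_(i | e p i) x 0 i = 0 by rewrite -Hx xp mulr0.
have evp : e p v by move: cpv => /andP [].
rewrite (bigD1 v) //= in Hsum.
rewrite big1 ?addr0 // in Hsum => i /andP [epi iv].
case/orP: (nbr epi) => [di|cpi]; first by apply: IH; rewrite -dp.
case si: (small i); first exact: small_zero cpi si xp.
have [pi ir] := ch_par cpi.
apply: HS; rewrite /Ss !inE (negPf ir) /= /big ir si /= andbT.
apply/imsetP => -[w' w'Bi iw'].
have := desigP w'Bi; rewrite -iw' => /andP [cw'i _].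
have [pw' _] := ch_par cw'i.
move: iv; rewrite iw' -pw' pi -wp -vw; by rewrite eqxx.
Qed.

Lemma forcing v : x 0 v = 0.
Proof. exact: (@forcing_depth (depth v)). Qed.

End Forcing.

Local Close Scope ring_scope.

Lemma child_of_nbr c b : e c b -> b != par c -> ch c b.
Proof.
move=> ecb bp; case/orP: (nbr ecb) => // db; exfalso.
move: db; rewrite leq_eqVlt => /orP [/eqP db|db].
  by move: (no_same_depth ecb); rewrite db eqxx.
have cr : c != r by rewrite neq_r_depth; apply: leq_ltn_trans db.
have := depth_edge (_ : e b c); rewrite sym_e => /(_ ecb) hc.
have dd : (depth b).+1 = depth c by apply/eqP; rewrite eqn_leq hc db.
by move: bp; rewrite (par_uniq _ dd) ?eqxx // sym_e.
Qed.

Lemma card_Ss : (#|Ss| <= 1 + #|Bl|)%N.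
Proof.
rewrite /Ss cardsU1; apply: leq_add; first by case: (r \notin _).
have DB : Ds \subset Bs.
  apply/subsetP => u /imsetP [w wB ->]; rewrite inE.
  by have /andP [] := desigP wB.
rewrite cardsDS // card_in_imset; last first.
  move=> w1 w2 w1B w2B h.
  have /andP [c1 _] := desigP w1B; have /andP [c2 _] := desigP w2B.
  have [p1 _] := ch_par c1; have [p2 _] := ch_par c2.
  by rewrite -p1 -p2 h.
rewrite -(cardsID Bi Bs) /Bl.
have : (#|Bs :&: Bi| <= #|Bi|)%N by apply: subset_leq_card; apply: subsetIr.
lia.
Qed.

Definition own w := if w \in Bl then w else if par w \in Bl then par w
  else par (par w).

Lemma own_r : own r \notin Bl.
Proof.
have rB : r \notin Bl by rewrite !inE /big eqxx /= andbF.
by rewrite /own (negPf rB) par_r (negPf rB) par_r.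
Qed.

Lemma big_notBl w : ~~ big w -> w \notin Bl.
Proof. by move=> bw; rewrite !inE (negPf bw) andbF. Qed.

Lemma deg_ge1 v : v != r -> (1 <= deg v)%N.
Proof.
move=> /parP [ep _]; rewrite /deg /degree card_gt0; apply/set0Pn.
by exists (par v); rewrite inE sym_e.
Qed.

Lemma nbr_out v (A : {set 'I_n}) : (#|A| < deg v)%N -> exists2 u, e v u & u \notin A.
Proof.
move=> h; have : ~~ ([set u | e v u] \subset A).
  by apply/negP => /subset_leq_card h'; have := leq_ltn_trans h' h; rewrite ltnn.
by case/subsetPn => u; rewrite inE => evu uA; exists u.
Qed.

Lemma fiber3 c : c \in Bl -> (3 <= #|[set w | own w == c]|)%N.
Proof.
move=> cBl; have := cBl; rewrite !inE => /andP [cBi /andP [cr csm]].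
have d1 : deg c != 1%N by move: csm; rewrite /small negb_or => /andP [].
have d2 : (1 < deg c)%N by move: (deg_ge1 cr) d1; lia.
have [b ecb bp] : exists2 b, e c b & b \notin [set par c].
  by apply: nbr_out; rewrite cards1.
rewrite inE in bp.
have cb := child_of_nbr ecb bp.
have nbb : ~~ big b.
  by apply: contra cBi => bb; apply/existsP; exists b; rewrite cb bb.
have [pb br] := ch_par cb.
have ob : own b = c.
  by rewrite /own (negPf (big_notBl nbb)) pb cBl.
have sb : small b by move: nbb; rewrite /big br /= negbK.
have cbn : c != b by apply/eqP => h; move: cb; rewrite h /ch eirr.
have three : forall a1 a2 a3, a1 != a2 -> a1 != a3 -> a2 != a3 ->
    own a1 = c -> own a2 = c -> own a3 = c -> (3 <= #|[set w | own w == c]|)%N.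
  move=> a1 a2 a3 h12 h13 h23 o1 o2 o3.
  have : a1 |: [set a2; a3] \subset [set w | own w == c].
    by apply/subsetP => w; rewrite !inE => /or3P [] /eqP ->; rewrite ?o1 ?o2 ?o3.
  move/subset_leq_card; rewrite cardsU1 cards2 !inE h23 negb_or h12 h13 /=.
  by [].
case/orP: sb => [/eqP db | /andP [/eqP db2 /existsP [l /andP [cbl /eqP dl]]]].
  have d3 : (2 < deg c)%N.
    move: csm; rewrite /small negb_or => /andP [_]; rewrite negb_and.
    case/orP => [h|]; first by move: h d2; lia.
    by rewrite negb_exists => /forallP /(_ b); rewrite cb db eqxx.
  have [b' ecb' b'n] : exists2 b', e c b' & b' \notin [set par c; b].
    by apply: nbr_out; rewrite cards2; case: (_ != _).
  move: b'n; rewrite !inE negb_or => /andP [b'p b'b].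
  have cb' := child_of_nbr ecb' b'p.
  have nbb' : ~~ big b'.
    by apply: contra cBi => bb; apply/existsP; exists b'; rewrite cb' bb.
  have [pb' _] := ch_par cb'.
  have ob' : own b' = c.
    by rewrite /own (negPf (big_notBl nbb')) pb' cBl.
  have cb'n : c != b'.
    by apply/eqP => h; move: cb'; rewrite h /ch eirr.
  apply: (three c b b' cbn cb'n _ _ ob ob'); first by rewrite eq_sym.
  by rewrite /own cBl.
have [pl lr] := ch_par cbl.
have nbl : ~~ big l.
  by rewrite /big negb_and negbK /small dl eqxx orbT.
have ol : own l = c.
  by rewrite /own (negPf (big_notBl nbl)) pl (negPf (big_notBl nbb)) pb.
have bln : b != l by apply/eqP => h; move: cbl; rewrite h /ch eirr.
have dl' : depth l = (depth c).+2.
  by move: cbl cb => /andP [_ /eqP ->] /andP [_ /eqP ->].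
have cln : c != l.
  by apply/eqP => h; move: dl'; rewrite -h => /eqP; rewrite ltn_eqF // leqW.
apply: (three c b l cbn cln bln _ ob ol).
by rewrite /own cBl.
Qed.

Lemma card_Bl : (3 * #|Bl| <= n.-1)%N.
Proof.
have h1 : (3 * #|Bl| <= \sum_(c in Bl) #|[set w | own w == c]|)%N.
  rewrite mulnC -sum_nat_const; apply: leq_sum => c cB; exact: fiber3.
apply: leq_trans h1 _.
have h2 : forall c, #|[set w | own w == c]| = \sum_w (own w == c : nat).
  move=> c; rewrite -sum1_card big_mkcond; apply: eq_bigr => w _.
  by rewrite inE; case: (own w == c).
under eq_bigr do rewrite h2.
rewrite exchange_big /=.
have h3 : forall w, (\sum_(c in Bl) (own w == c : nat) = (own w \in Bl))%N.
  move=> w; case: (boolP (own w \in Bl)) => ow.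
    rewrite (bigD1 (own w)) //= eqxx big1 // => c /andP [_ cw].
    by rewrite eq_sym (negPf cw).
  rewrite big1 // => c cB; case: eqP => // h; by move: ow; rewrite h cB.
under eq_bigr do rewrite h3.
have -> : n.-1 = #|predC1 r| by rewrite cardC1 card_ord.
rewrite -sum1_card [X in (_ <= X)%N]big_mkcond /=; apply: leq_sum => w _.
rewrite [w \in predC1 r]inE /=; case: (eqVneq w r) => [->|_] /=.
  by rewrite (negPf own_r).
by case: (own w \in Bl).
Qed.

End Tree.


Local Open Scope ring_scope.

Lemma rank_det (F : fieldType) n (K : 'M[F]_n) (S : {set 'I_n}) :
  (forall u : 'rV_n, (u <= K)%MS -> (forall s, s \in S -> u 0 s = 0) -> u = 0) ->
  (\rank K <= #|S|)%N.
Proof.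
move=> H.
pose Q : 'M[F]_(n, #|S|) := \matrix_(i, k) (i == enum_val k)%:R.
have cap : (K :&: kermx Q)%MS = 0.
  apply/eqP; rewrite -submx0; apply/row_subP => i.
  set u := row i _.
  have uK : (u <= K)%MS by apply: submx_trans (row_sub _ _) (capmxSl _ _).
  have uQ : (u <= kermx Q)%MS by apply: submx_trans (row_sub _ _) (capmxSr _ _).
  rewrite (H u uK) ?sub0mx // => s sS.
  have es := enum_rankK_in sS sS.
  move: (enum_rank_in sS s) es => k es.
  move/sub_kermxP: uQ => /rowP /(_ k); rewrite !mxE => h0.
  rewrite -es -h0 (bigD1 (enum_val k)) //= !mxE eqxx mulr1 big1 ?addr0 //.
  by move=> l lk; rewrite /Q !mxE (negPf lk) mulr0.
have := mxrank_mul_ker K Q; rewrite cap mxrank0 addn0 => <-.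
exact: rank_leq_col.
Qed.

Theorem lemma4p3 (R : rcfType) (j n : nat) (e : rel 'I_n) (mu : R) :
  (2 <= j)%N -> (10 * j < n)%N -> is_tree e ->
  eigenvalue (laplacian R e) mu -> mu != 1 ->
  lap_mult e mu = (n./2 - j)%N ->
  mu = (3 + Num.sqrt 5) / 2 \/ mu = (3 - Num.sqrt 5) / 2.
Proof.
move=> j2 jn [[sym irr] conn acyc] _ mu1 hm.
case: (eqVneq (mu ^+ 2 - 3%:R * mu + 1) 0) => [h|mu2].
  have s5 : Num.sqrt (5 : R) ^+ 2 = 5 by rewrite sqr_sqrtr // ler0n.
  have : (2 * mu - 3) ^+ 2 == Num.sqrt 5 ^+ 2.
    by rewrite s5 -subr_eq0; apply/eqP; rewrite -[RHS](mulr0 4) -h; ring.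
  have h20 : (2 : R) != 0 by rewrite pnatr_eq0.
  by rewrite eqf_sqr => /orP [] /eqP h2; [left|right];
    rewrite -h2; field.
exfalso.
have n0 : (0 < n)%N by lia.
pose r : 'I_n := Ordinal n0.
have LT : (laplacian R e)^T = laplacian R e.
  apply/matrixP => a b; rewrite !mxE sym; case: (eqVneq a b) => [->//|ab].
  by [].
have hm' := mup_sym mu LT.
rewrite /lap_mult hm' in hm.
have rk : (\rank (eigenspace (laplacian R e) mu) <= #|Ss r conn|)%N.
  apply: rank_det => u /eigenspaceP uL uS.
  apply/rowP => v; rewrite mxE.
  have Hx : u *m (laplacian R e - mu%:M) = 0.
    by rewrite mulmxBr uL mul_mx_scalar subrr.
  exact: (forcing sym acyc mu1 mu2 (lap_eq sym irr Hx) uS v).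
have c1 := card_Ss r sym conn acyc.
have c2 := card_Bl r sym irr conn acyc.
move: rk c1 c2; rewrite hm; lia.
Qed.
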